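(* Let $R\in\operatorname{Ob}(\hat{\mathcal C})$, $n\ge2$, $G=\mathrm{SL}_n(R)$, $\bar\rho:G\to\mathrm{GL}_n(k)$ induced by reduction, $\iota:G\hookrightarrow\mathrm{GL}_n(R)$ the inclusion, and let $S\in\operatorname{Ob}(\hat{\mathcal C})$. (i) The map $\iota_*(S):\mathrm{Hom}_{\hat{\mathcal C}}(R,S)\to\mathrm{Def}_{\bar\rho}(S)$, $f\mapsto[\mathrm{GL}_n(f)\circ\iota]$, is injective. (ii) For $\xi\in\mathrm{Def}_{\bar\rho}(S)$, we have $\xi\in\operatorname{im}\iota_*(S)$ if and only if there is a lift $\rho\in\xi$ such that for every pair $a\ne b$ in $\{1,\dots,n\}$ and every $r\in R$ there exists $c^r_{ab}\in S$ with $\rho(t^r_{ab})=t^{c^r_{ab}}_{ab}$.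
   Context: Let $k$ be a finite field. $\hat{\mathcal C}$ is the category of complete noetherian local commutative rings with residue field $k$, with local homomorphisms inducing the identity on $k$; $\mathfrak m_S$ is the maximal ideal of $S$. For a profinite group $G$ and continuous $\bar\rho:G\to\mathrm{GL}_n(k)$, a lift to $S$ is a continuous $\rho:G\to\mathrm{GL}_n(S)$ reducing to $\bar\rho$; lifts are strictly equivalent if conjugate by an element of $I+M_n(\mathfrak m_S)$; $\mathrm{Def}_{\bar\rho}(S)$ is the set of strict equivalence classes $[\rho]$. $\mathrm{GL}_n(f)$ applies $f$ entrywise. For a commutative ring $A$, $r\in A$ and $a\ne b$, $e_{ab}$ is the matrix unit with $1$ in position $(a,b)$ and $t^r_{ab}=I+re_{ab}$. *)

(* Defs.v *)
From HB Require Import structures.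
From mathcomp Require Import all_boot all_order all_algebra all_field.
Set Implicit Arguments.
Unset Strict Implicit.
Unset Printing Implicit Defensive.
Import GRing.Theory.
Local Open Scope ring_scope.

(* An object of \hat C is modelled as a commutative ring R together with a
   reduction map pi : R -> k (a ring morphism).  The maximal ideal is ker pi. *)
Section LocalRings.
Variables (k : fieldType) (R : comUnitRingType) (pi : {rmorphism R -> k}).

Definition mideal (x : R) : Prop := pi x = 0.

Fixpoint mpow (N : nat) : R -> Prop :=
  match N with
  | 0 => fun _ => True
  | N'.+1 => fun x => exists s : seq (R * R),
      (forall p, p \in s -> mideal p.1 /\ mpow N' p.2) /\
      x = \sum_(p <- s) p.1 * p.2
  end.

Definition is_ideal (I : R -> Prop) : Prop :=
  I 0 /\ (forall x y, I x -> I y -> I (x + y)) /\ (forall a x, I x -> I (a * x)).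

Definition noetherian : Prop :=
  forall I : R -> Prop, is_ideal I ->
    exists g : seq R, forall x, I x <->
      exists c : seq R, size c = size g /\ x = \sum_(i < size g) c`_i * g`_i.

Definition local_with_residue : Prop :=
  (forall y : k, exists x : R, pi x = y) /\
  (forall x : R, pi x != 0 -> x \is a GRing.unit).

Definition madic_separated : Prop :=
  forall x : R, (forall N, mpow N x) -> x = 0.

Definition madic_complete : Prop :=
  forall u : nat -> R,
    (forall N, exists M, forall i j, (M <= i)%N -> (M <= j)%N -> mpow N (u i - u j)) ->
    exists l : R, forall N, exists M, forall i, (M <= i)%N -> mpow N (u i - l).

Definition is_CObj : Prop :=
  local_with_residue /\ noetherian /\ madic_separated /\ madic_complete.

Definition congr_mx (n N : nat) (A B : 'M[R]_n) : Prop :=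
  forall i j, mpow N (A i j - B i j).

Definition inSL (n : nat) (g : 'M[R]_n) : Prop := \det g = 1.

End LocalRings.

Definition is_Chom (k : fieldType) (R S : comUnitRingType)
  (piR : {rmorphism R -> k}) (piS : {rmorphism S -> k}) (f : {rmorphism R -> S}) : Prop :=
  forall x, piS (f x) = piR x.

(* rho is a lift to S of rhobar = reduction : SL_n(R) -> GL_n(k):
   a continuous group homomorphism SL_n(R) -> GL_n(S) reducing to rhobar.
   (Only values on SL_n(R) matter.)  Continuity of a homomorphism is
   expressed as continuity at the identity for the adic topologies. *)
Definition is_lift (k : fieldType) (R S : comUnitRingType)
  (piR : {rmorphism R -> k}) (piS : {rmorphism S -> k}) (n : nat)
  (rho : 'M[R]_n -> 'M[S]_n) : Prop :=
  (forall g, inSL g -> rho g \in unitmx) /\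
  (forall g h, inSL g -> inSL h -> rho (g *m h) = rho g *m rho h) /\
  (forall g, inSL g -> map_mx piS (rho g) = map_mx piR g) /\
  (forall m : nat, exists N : nat, forall g, inSL g ->
     congr_mx piR N g 1%:M -> congr_mx piS m (rho g) 1%:M).

(* strict equivalence: conjugation by an element of I + M_n(m_S) *)
Definition strict_equiv (k : fieldType) (R S : comUnitRingType)
  (piS : {rmorphism S -> k}) (n : nat) (rho1 rho2 : 'M[R]_n -> 'M[S]_n) : Prop :=
  exists M : 'M[S]_n, map_mx piS M = 1%:M /\
    forall g : 'M[R]_n, inSL g -> rho2 g = M *m rho1 g *m invmx M.

Definition elem_mx (A : comUnitRingType) (n : nat) (a b : 'I_n) (r : A) : 'M[A]_n :=
  1%:M + r *: delta_mx a b.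

(* Main.v *)
Require Import Defs.
From HB Require Import structures.
From mathcomp Require Import all_boot all_order all_algebra all_field.
From mathcomp Require Import ring.
Import GRing.Theory.
Local Open Scope ring_scope.

Set Implicit Arguments.
Unset Strict Implicit.
Unset Printing Implicit Defensive.

Section Elem.
Variables (R : comUnitRingType) (n : nat).
Implicit Types (a b i j : 'I_n) (x y : R) (g : 'M[R]_n).

Lemma elemE a b x i j : elem_mx a b x i j = (i == j)%:R + ((i == a) && (j == b))%:R * x.
Proof. by rewrite /elem_mx !mxE mulrC. Qed.

Lemma elemMl a b x g i j :
  (elem_mx a b x *m g) i j = g i j + (i == a)%:R * (x * g b j).
Proof.
rewrite /elem_mx mulmxDl mul1mx -scalemxAl !mxE (bigD1 b) //= mxE eqxx andbT.
rewrite big1 ?addr0 => [|k /negPf kb]; last by rewrite mxE kb andbF mul0r.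
by rewrite mulrCA.
Qed.

Lemma elemMr a b x g i j :
  (g *m elem_mx a b x) i j = g i j + (j == b)%:R * (x * g i a).
Proof.
rewrite /elem_mx mulmxDr mulmx1 -scalemxAr !mxE (bigD1 a) //= mxE eqxx /=.
rewrite big1 ?addr0 => [|k /negPf kb]; last by rewrite mxE kb /= mulr0.
by case: (j == b); rewrite ?mulr1 ?mulr0 ?mul1r ?mul0r // mulrC.
Qed.

Lemma elem_ab a b x : a != b -> elem_mx a b x a b = x.
Proof. by move=> /negPf ab; rewrite elemE ab !eqxx add0r mul1r. Qed.

Lemma elem0 a b : elem_mx a b (0:R) = 1%:M.
Proof. by rewrite /elem_mx scale0r addr0. Qed.

Lemma elemD a b x y : a != b ->
  elem_mx a b x *m elem_mx a b y = elem_mx a b (x + y).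
Proof.
move=> /negPf ab; have ba : (b == a) = false by rewrite eq_sym.
apply/matrixP=> i j; rewrite elemMl !elemE.
case: (eqVneq i a) => [->|ia]; case: (eqVneq j b) => [->|jb];
  rewrite ?eqxx ?ab ?ba ?(eq_sym b j) ?(negPf jb) /= ?mul0r ?mul1r ?mulr0 ?addr0 ?add0r ?mulr1 //.
all: ring.
Qed.

Lemma det_elem a b x : a != b -> \det (elem_mx a b x) = 1.
Proof.
move=> ab.
have diag1 : forall i, elem_mx a b x i i = 1.
  move=> i; rewrite elemE eqxx; case: eqP => [->|]; last by rewrite mul0r addr0.
  by rewrite (negPf ab) mul0r addr0.
case: (ltnP a b) => hab.
  rewrite -det_tr det_trig; first by rewrite big1 // => i _; rewrite mxE diag1.
  apply/is_trig_mxP=> i j lij; rewrite mxE elemE.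
  case: (eqVneq j i) => [ji|_]; first by move: lij; rewrite ji ltnn.
  case: (eqVneq j a) => [ja|_]; case: (eqVneq i b) => [ib|_]; rewrite /= ?mul0r ?add0r //.
  by rewrite ja ib in lij; move: (ltn_trans lij hab); rewrite ltnn.
rewrite det_trig; first by rewrite big1.
apply/is_trig_mxP=> i j lij; rewrite elemE.
case: (eqVneq i j) => [ji|_]; first by move: lij; rewrite ji ltnn.
case: (eqVneq i a) => [ja|_]; case: (eqVneq j b) => [ib|_]; rewrite /= ?mul0r ?add0r //.
by rewrite ja ib in lij; move: (leq_ltn_trans hab lij); rewrite ltnn.
Qed.

End Elem.

Section IsE.
Variables (R : comUnitRingType).

Inductive isE n : 'M[R]_n -> Prop :=
| isE1 : isE 1%:M
| isEM (a b : 'I_n) (r : R) g : a != b -> isE g -> isE (elem_mx a b r *m g).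

Lemma isE_mul n (g h : 'M[R]_n) : isE g -> isE h -> isE (g *m h).
Proof.
move=> Eg Eh; elim: Eg => [|a b r g' ab _ IH]; first by rewrite mul1mx.
by rewrite -mulmxA; apply: isEM.
Qed.

Lemma isE_elem n (a b : 'I_n) r : a != b -> isE (elem_mx a b r).
Proof. by move=> ab; rewrite -[elem_mx _ _ _]mulmx1; apply: isEM => //; apply: isE1. Qed.

Lemma isE_det n (g : 'M[R]_n) : isE g -> \det g = 1.
Proof.
elim=> [|a b r g' ab _ IH]; first by rewrite det1.
by rewrite det_mulmx det_elem // IH mul1r.
Qed.

Lemma isE_inv n (g : 'M[R]_n) : isE g -> exists g', isE g' /\ g' *m g = 1%:M.
Proof.
elim=> [|a b r g' ab _ [g'' [Eg'' Hg'']]].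
  by exists 1%:M; split; [apply: isE1 | rewrite mulmx1].
exists (g'' *m elem_mx a b (- r)); split; first by apply: isE_mul => //; apply: isE_elem.
by rewrite mulmxA -(mulmxA g'') elemD // addNr elem0 mulmx1.
Qed.

Lemma tr_elem n (a b : 'I_n) (r : R) : (elem_mx a b r)^T = elem_mx b a r.
Proof. by rewrite /elem_mx linearD /= linearZ /= trmx1 trmx_delta. Qed.

Lemma isE_tr n (g : 'M[R]_n) : isE g -> isE g^T.
Proof.
elim=> [|a b r g' ab _ IH]; first by rewrite trmx1; apply: isE1.
rewrite trmx_mul tr_elem; apply: isE_mul => //; apply: isE_elem.
by rewrite eq_sym.
Qed.

Lemma block_elem n (a b : 'I_n) (r : R) :
  block_mx (1%:M : 'M_1) 0 0 (elem_mx a b r) = elem_mx (rshift 1 a) (rshift 1 b) r.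
Proof.
apply/matrixP=> i j; rewrite elemE.
rewrite -[i]splitK -[j]splitK; case: (split i) => i'; case: (split j) => j' /=;
  rewrite ?block_mxEul ?block_mxEur ?block_mxEdl ?block_mxEdr !eq_shift ?elemE ?mxE ?ord1 ?eqxx /= ?andbF ?mul0r ?addr0 ?add0r //.
Qed.

Lemma isE_block n (g : 'M[R]_n) : isE g -> isE (block_mx (1%:M : 'M_1) 0 0 g : 'M_(1 + n)).
Proof.
elim=> [|a b r g' ab _ IH].
  by rewrite -scalar_mx_block; apply: isE1.
have -> : block_mx (1%:M : 'M_1) 0 0 (elem_mx a b r *m g') =
   block_mx (1%:M : 'M_1) 0 0 (elem_mx a b r) *m block_mx 1%:M 0 0 g'.
  by rewrite mulmx_block !mulmx0 !mul0mx !addr0 !add0r mulmx1.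
by rewrite block_elem; apply: isEM => //; rewrite eq_shift.
Qed.

End IsE.

Section Gen.
Variables (k : fieldType) (R : comUnitRingType) (pi : {rmorphism R -> k}).
Hypothesis loc : forall x : R, pi x != 0 -> x \is a GRing.unit.

Definition Sset n (h : 'M[R]_n.+1) := [set i : 'I_n.+1 | (i != ord0) && (h i ord0 != 0)].

Lemma clear_col n (h : 'M[R]_n.+1) : h ord0 ord0 = 1 ->
  exists E, isE E /\ (forall i, (E *m h) i ord0 = (i == ord0)%:R) /\
     (forall j, (E *m h) ord0 j = h ord0 j).
Proof.
move=> h00; move: (leqnn #|Sset h|); move: {2}#|Sset h| => c.
elim: c h h00 => [|c IH] h h00 hc.
  exists 1%:M; split; first exact: isE1.
  split=> [i|j]; rewrite mul1mx //.
  case: (eqVneq i ord0) => [->|ni]; first by rewrite h00.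
  move: hc; rewrite leqn0 => /eqP/cards0_eq/setP/(_ i); rewrite !inE ni /=.
  by case: eqP.
case: (set_0Vmem (Sset h)) => [S0|[i Si]].
  by apply: IH => //; rewrite S0 cards0.
have [ni hi] : i != ord0 /\ h i ord0 != 0 by move: Si; rewrite inE => /andP.
pose h' := elem_mx i ord0 (- h i ord0) *m h.
have h'E : forall i' j, h' i' j = h i' j + (i' == i)%:R * (- h i ord0 * h ord0 j).
  by move=> i' j; rewrite /h' elemMl.
have ni' : (ord0 == i) = false by rewrite eq_sym; apply/negbTE.
have [E [EE [E1 E2]]] : exists E, isE E /\ (forall i, (E *m h') i ord0 = (i == ord0)%:R) /\
     (forall j, (E *m h') ord0 j = h' ord0 j).
  apply: IH; first by rewrite h'E ni' mul0r addr0.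
  have sub : Sset h' \subset Sset h :\ i.
    apply/subsetP=> i'; rewrite !inE h'E.
    case: (eqVneq i' i) => [->|ii]; first by rewrite h00 mulr1 mul1r addrN eqxx andbF.
    by rewrite mul0r addr0.
  move: (subset_leq_card sub); rewrite (cardsD1 i (Sset h)) Si add1n in hc.
  by move=> /leq_trans; apply.
exists (E *m elem_mx i ord0 (- h i ord0)); split.
  by apply: isE_mul => //; apply: isE_elem.
by rewrite -!mulmxA; split=> [i'|j]; rewrite ?E1 // E2 h'E ni' mul0r addr0.
Qed.


Lemma pivot n (g : 'M[R]_n.+1) : \det g = 1 -> exists E, isE E /\ (E *m g) ord0 ord0 = 1.
Proof.
case: n g => [|m] g dg.
  exists 1%:M; split; first exact: isE1.
  by rewrite mul1mx -dg det_mx11.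
have [i0 hi0] : exists i, pi (g i ord0) != 0.
  case: (pickP (fun i => pi (g i ord0) != 0)) => [i hi|none]; first by exists i.
  exfalso; move: (congr1 pi dg); rewrite (expand_det_col g ord0) rmorph_sum rmorph1 big1 => [|i _].
    by move/esym/eqP; rewrite oner_eq0.
  by rewrite rmorphM; move: (none i) => /negbFE/eqP ->; rewrite mul0r.
have key : forall h : 'M[R]_m.+2, forall i, i != ord0 -> h i ord0 \is a GRing.unit ->
    exists E, isE E /\ (E *m h) ord0 ord0 = 1.
  move=> h i ni u.
  exists (elem_mx ord0 i ((1 - h ord0 ord0) / h i ord0)); split.
    by apply: isE_elem; rewrite eq_sym.
  by rewrite elemMl eqxx mul1r -mulrA mulVr // mulr1 addrC subrK.
case: (eqVneq i0 ord0) => [e0|ni0]; last by apply: key ni0 (loc hi0).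
pose i1 : 'I_m.+2 := lift ord0 ord0.
have ni1 : i1 != ord0 by rewrite eq_sym neq_lift.
pose u := g ord0 ord0.
have uu : u \is a GRing.unit.
  by apply: loc; move: hi0; rewrite e0.
pose g1 := elem_mx i1 ord0 ((1 - g i1 ord0) / u) *m g.
have g1E : g1 i1 ord0 = 1.
  by rewrite /g1 elemMl eqxx mul1r -mulrA mulVr // mulr1 addrC subrK.
have [E [EE HE]] : exists E, isE E /\ (E *m g1) ord0 ord0 = 1.
  by apply: (key g1 i1 ni1); rewrite g1E unitr1.
exists (E *m elem_mx i1 ord0 ((1 - g i1 ord0) / u)); split.
  by apply: isE_mul => //; apply: isE_elem.
by rewrite -mulmxA.
Qed.


Lemma genSL n (g : 'M[R]_n) : \det g = 1 -> isE g.
Proof.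
elim: n g => [|n IH] g dg.
  have -> : g = 1%:M by apply/matrixP => [[]].
  exact: isE1.
have [E1 [EE1 H1]] := pivot dg.
have [E2 [EE2 [H2c H2r]]] := clear_col H1.
pose h := E2 *m (E1 *m g).
have hT00 : h^T ord0 ord0 = 1 by rewrite mxE /h H2c eqxx.
have [E3 [EE3 [H3c H3r]]] := clear_col hT00.
pose F := E3 *m h^T.
have dF : \det F = 1.
  by rewrite /F det_mulmx det_tr /h !det_mulmx (isE_det EE3) (isE_det EE2) (isE_det EE1) dg !mul1r.
have l0 : lshift n (0 : 'I_1) = ord0 :> 'I_(1 + n) by apply: val_inj.
have r0 : forall i : 'I_n, (rshift 1 i == ord0 :> 'I_(1+n)) = false by [].
have Fc : forall i, F i ord0 = (i == ord0)%:R by exact: H3c.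
have Fr : forall j, F ord0 j = h j ord0 by move=> j; rewrite /F H3r mxE.
have hc : forall i, h i ord0 = (i == ord0)%:R by exact: H2c.
have FE : (F : 'M_(1 + n)) = block_mx (1%:M : 'M_1) 0 0 (drsubmx (F : 'M_(1 + n))).
  clearbody F h.
  rewrite -{1}(submxK (F : 'M_(1+n))); congr block_mx; apply/matrixP => i j; rewrite !mxE ?ord1 ?l0.
  - by rewrite Fc.
  - by rewrite Fr hc r0.
  - by rewrite Fc r0.
have dg' : \det (drsubmx (F : 'M_(1 + n))) = 1.
  have dF' : @determinant _ (1 + n) F = 1 := dF.
  by move: dF'; rewrite {1}FE det_ublock det1 mul1r.
have EF : isE F by rewrite FE; apply: isE_block; apply: IH.
have [E3' [EE3' H3']] := isE_inv EE3.
have EhT : isE h^T.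
  have -> : h^T = E3' *m F by rewrite /F mulmxA H3' mul1mx.
  by apply: isE_mul.
have Eh : isE h by rewrite -(trmxK h); apply: isE_tr.
have [E1' [EE1' H1']] := isE_inv EE1.
have [E2' [EE2' H2']] := isE_inv EE2.
have -> : g = E1' *m (E2' *m h) by rewrite /h (mulmxA E2') H2' mul1mx mulmxA H1' mul1mx.
by apply: isE_mul => //; apply: isE_mul.
Qed.

End Gen.

Ltac idx_case i a := let H := fresh "H" in let H' := fresh "H" in
  case: (eqVneq i a) => [?|/negPf H]; [subst i| have H' := H; rewrite eq_sym in H'].

Ltac zsimp := do 3 rewrite ?mul0r ?mul1r ?mulr0 ?mulr1 ?addr0 ?add0r ?subr0 ?sub0r ?oppr0.

Ltac eqsimp := rewrite ?eqxx;
  repeat match goal with H : (_ == _) = false |- _ => rewrite ?H; clear H end;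
  rewrite /=.

Section Gen2.
Variables (T : comUnitRingType) (n : nat).
Implicit Types (a b c i j : 'I_n).

Lemma commE a b c (r s : T) : a != b -> b != c -> a != c ->
  elem_mx a b r *m elem_mx b c s *m elem_mx a b (- r) *m elem_mx b c (- s) = elem_mx a c (r * s).
Proof.
move=> /negPf ab /negPf bc /negPf ac.
have ba := ab; rewrite eq_sym in ba. have cb := bc; rewrite eq_sym in cb.
have ca := ac; rewrite eq_sym in ca.
apply/matrixP=> i j; rewrite -!mulmxA !elemMl !elemE.
idx_case i a; [|idx_case i b; [|idx_case i c]];
idx_case j a; try (idx_case j b; [|idx_case j c]); eqsimp; ring.
Qed.

Definition Wm a b (x y : T) : 'M[T]_n :=
  1%:M - delta_mx a a - delta_mx b b + x *: delta_mx a b - y *: delta_mx b a.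

Lemma WmE a b x y i j : Wm a b x y i j = (i == j)%:R - ((i == a) && (j == a))%:R
  - ((i == b) && (j == b))%:R + ((i == a) && (j == b))%:R * x - ((i == b) && (j == a))%:R * y.
Proof. by rewrite /Wm !mxE ![_ * ((_ && _)%:R)]mulrC. Qed.

Lemma wE a b x y : a != b -> x * y = 1 ->
  elem_mx a b x *m elem_mx b a (- y) *m elem_mx a b x = Wm a b x y.
Proof.
move=> /negPf ab xy; have ba := ab; rewrite eq_sym in ba.
apply/matrixP=> i j; rewrite -!mulmxA !elemMl !elemE WmE.
idx_case i a; [|idx_case i b]; idx_case j a; try idx_case j b; eqsimp;
  do 3 rewrite ?mul0r ?mul1r ?mulr0 ?mulr1 ?addr0 ?add0r ?subr0 ?sub0r ?oppr0;
  rewrite ?mulrN ?mulNr ?(mulrC y x) ?xy; ring.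
Qed.


Lemma wE' a b x y : a != b -> x * y = 1 ->
  elem_mx b a (- y) *m elem_mx a b x *m elem_mx b a (- y) = Wm a b x y.
Proof.
move=> /negPf ab xy; have ba := ab; rewrite eq_sym in ba.
apply/matrixP=> i j; rewrite -!mulmxA !elemMl !elemE WmE.
idx_case i a; [|idx_case i b]; idx_case j a; try idx_case j b; eqsimp; zsimp;
  rewrite ?mulrN ?mulNr ?(mulrC y x) ?xy; ring.
Qed.

Lemma w_ab a b (x y : T) : a != b ->
  (elem_mx a b x *m elem_mx b a (- y) *m elem_mx a b x) a b = x + x * (1 - x * y).
Proof.
move=> /negPf ab; have ba := ab; rewrite eq_sym in ba.
rewrite -!mulmxA !elemMl !elemE; eqsimp; ring.
Qed.

Lemma w'_ab a b (x y : T) : a != b ->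
  (elem_mx b a (- y) *m elem_mx a b x *m elem_mx b a (- y)) a b = x.
Proof.
move=> /negPf ab; have ba := ab; rewrite eq_sym in ba.
rewrite -!mulmxA !elemMl !elemE; eqsimp; ring.
Qed.

Lemma WmMl a b x y (B : 'M[T]_n) i j : a != b ->
  (Wm a b x y *m B) i j = if i == a then x * B b j else if i == b then - (y * B a j) else B i j.
Proof.
move=> /negPf ab; have ba := ab; rewrite eq_sym in ba.
have dM : forall p q : 'I_n, (delta_mx p q *m B) i j = (i == p)%:R * B q j.
  move=> p q; rewrite !mxE (bigD1 q) //= mxE eqxx andbT big1 ?addr0 //.
  by move=> k /negPf kq; rewrite mxE kq andbF mul0r.
rewrite /Wm !mulmxDl !mulNmx mul1mx -!scalemxAl.
rewrite ![((_ + _ : 'M_n) _ _)]mxE ![((- _ : 'M_n) _ _)]mxE ![((_ *: _ : 'M_n) _ _)]mxE !dM.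
idx_case i a; [|idx_case i b]; eqsimp; ring.
Qed.

Lemma Wm_ab a b x y : a != b -> Wm a b x y a b = x.
Proof.
move=> /negPf ab; have ba := ab; rewrite eq_sym in ba.
by rewrite WmE; eqsimp; ring.
Qed.

Lemma Wm3 a b x1 y1 x2 y2 x3 y3 : a != b ->
  Wm a b x1 y1 *m Wm a b x2 y2 *m Wm a b x3 y3 = Wm a b (- (x1 * y2 * x3)) (- (y1 * x2 * y3)).
Proof.
move=> ab; apply/matrixP=> i j; rewrite -mulmxA !WmMl // !WmE.
move/negPf: ab => ab; have ba := ab; rewrite eq_sym in ba.
idx_case i a; [|idx_case i b]; idx_case j a; try idx_case j b; eqsimp; ring.
Qed.

End Gen2.

Section MkRM.
Variables (R S : comUnitRingType) (f : R -> S).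
Hypotheses (fB : forall x y, f (x - y) = f x - f y) (f1 : f 1 = 1)
  (fM : forall x y, f (x * y) = f x * f y).
Definition mkR := f.
HB.instance Definition _ := GRing.isZmodMorphism.Build R S mkR fB.
HB.instance Definition _ := GRing.isMonoidMorphism.Build R S mkR (f1, fM).
Definition mkRM : {rmorphism R -> S} := mkR.
Lemma mkRME x : mkRM x = f x. Proof. by []. Qed.
End MkRM.

Lemma map_elem (R S : comUnitRingType) (f : {rmorphism R -> S}) n (a b : 'I_n) r :
  map_mx f (elem_mx a b r) = elem_mx a b (f r).
Proof. by apply/matrixP=> i j; rewrite !mxE rmorphD rmorphM !rmorph_nat. Qed.

Section Back.
Variables (k : fieldType) (R S : comUnitRingType)
  (piR : {rmorphism R -> k}) (piS : {rmorphism S -> k}).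
Hypotheses (locR : forall x : R, piR x != 0 -> x \is a GRing.unit)
  (locS : forall x : S, piS x != 0 -> x \is a GRing.unit).
Variable m : nat.
Local Notation n := m.+2.
Variable rho : 'M[R]_n -> 'M[S]_n.
Hypotheses (rhoU : forall g, inSL g -> rho g \in unitmx)
  (rhoM : forall g h, inSL g -> inSL h -> rho (g *m h) = rho g *m rho h)
  (rhoR : forall g, inSL g -> map_mx piS (rho g) = map_mx piR g)
  (rhoE : forall a b : 'I_n, a != b -> forall r, exists c, rho (elem_mx a b r) = elem_mx a b c).

Definition C (a b : 'I_n) (r : R) := rho (elem_mx a b r) a b.

Lemma rhoEC a b r : a != b -> rho (elem_mx a b r) = elem_mx a b (C a b r).
Proof. by move=> ab; have [c hc] := rhoE ab r; rewrite /C hc elem_ab. Qed.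

Lemma isE_SL (g : 'M[R]_n) : isE g -> inSL g.
Proof. exact: isE_det. Qed.

Lemma rhoEM g h : isE g -> isE h -> rho (g *m h) = rho g *m rho h.
Proof. by move=> Eg Eh; apply: rhoM; apply: isE_SL. Qed.

Lemma rho1 : rho 1%:M = 1%:M.
Proof.
have SL1 : inSL (1%:M : 'M[R]_n) by rewrite /inSL det1.
have U := rhoU SL1.
have := rhoM SL1 SL1; rewrite mulmx1 => h.
by rewrite -[LHS](mulKmx U) -h mulVmx.
Qed.

Lemma CD a b r s : a != b -> C a b (r + s) = C a b r + C a b s.
Proof.
move=> ab; rewrite {1}/C -elemD // (rhoEM (isE_elem r ab) (isE_elem s ab)).
by rewrite !rhoEC // elemD // elem_ab.
Qed.

Lemma C0 a b : a != b -> C a b 0 = 0.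
Proof.
move=> ab; have h := CD 0 0 ab; rewrite addr0 in h.
by apply: (addrI (C a b 0)); rewrite addr0 -h.
Qed.

Lemma CN a b r : a != b -> C a b (- r) = - C a b r.
Proof. by move=> ab; apply/eqP; rewrite -addr_eq0 -CD // addNr C0. Qed.

Lemma Cpi a b r : a != b -> piS (C a b r) = piR r.
Proof.
move=> ab; have := rhoR (isE_SL (isE_elem r ab)).
by move/matrixP/(_ a b); rewrite !mxE (negPf ab) !eqxx mulr1 add0r.
Qed.

Lemma Cunit a b r : a != b -> r \is a GRing.unit -> C a b r \is a GRing.unit.
Proof.
move=> ab ur; apply: locS; rewrite Cpi //.
by have := rmorph_unit piR ur; rewrite unitfE.
Qed.


Lemma rho2 a1 b1 a2 b2 r1 r2 : a1 != b1 -> a2 != b2 ->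
  rho (elem_mx a1 b1 r1 *m elem_mx a2 b2 r2) =
  elem_mx a1 b1 (C a1 b1 r1) *m elem_mx a2 b2 (C a2 b2 r2).
Proof. by move=> h1 h2; rewrite (rhoEM (isE_elem r1 h1) (isE_elem r2 h2)) !rhoEC. Qed.

Lemma rho3 a1 b1 a2 b2 a3 b3 r1 r2 r3 : a1 != b1 -> a2 != b2 -> a3 != b3 ->
  rho (elem_mx a1 b1 r1 *m elem_mx a2 b2 r2 *m elem_mx a3 b3 r3) =
  elem_mx a1 b1 (C a1 b1 r1) *m elem_mx a2 b2 (C a2 b2 r2) *m elem_mx a3 b3 (C a3 b3 r3).
Proof.
move=> h1 h2 h3.
rewrite (rhoEM (isE_mul (isE_elem r1 h1) (isE_elem r2 h2)) (isE_elem r3 h3)).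
by rewrite rho2 // rhoEC.
Qed.

Lemma rho4 a1 b1 a2 b2 a3 b3 a4 b4 r1 r2 r3 r4 :
  a1 != b1 -> a2 != b2 -> a3 != b3 -> a4 != b4 ->
  rho (elem_mx a1 b1 r1 *m elem_mx a2 b2 r2 *m elem_mx a3 b3 r3 *m elem_mx a4 b4 r4) =
  elem_mx a1 b1 (C a1 b1 r1) *m elem_mx a2 b2 (C a2 b2 r2) *m elem_mx a3 b3 (C a3 b3 r3)
   *m elem_mx a4 b4 (C a4 b4 r4).
Proof.
move=> h1 h2 h3 h4.
rewrite (rhoEM (isE_mul (isE_mul (isE_elem r1 h1) (isE_elem r2 h2)) (isE_elem r3 h3))
  (isE_elem r4 h4)).
by rewrite rho3 // rhoEC.
Qed.

Lemma Cw a b u : a != b -> u \is a GRing.unit -> C a b u * C b a u^-1 = 1.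
Proof.
move=> ab uu; have ba : b != a by rewrite eq_sym.
have hR : elem_mx a b u *m elem_mx b a (- u^-1) *m elem_mx a b u =
          elem_mx b a (- u^-1) *m elem_mx a b u *m elem_mx b a (- u^-1).
  by rewrite wE ?wE' ?mulrV.
have := congr1 rho hR; rewrite !rho3 // !CN //.
move/matrixP/(_ a b); rewrite w_ab // w'_ab // => h.
have xu := Cunit ab uu.
have : C a b u * (1 - C a b u * C b a u^-1) = 0.
  by apply: (addrI (C a b u)); rewrite addr0.
rewrite -[RHS](mulr0 (C a b u)) => /(mulrI xu)/eqP.
by rewrite subr_eq0 => /eqP.
Qed.

Lemma mu a b : a != b -> C a b 1 * C b a 1 = 1.
Proof. by move=> ab; have := Cw ab (unitr1 R); rewrite invr1. Qed.

Lemma Cmul a b u v : a != b -> u \is a GRing.unit -> v \is a GRing.unit ->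
  C a b (u * v) = C a b u * C a b v * C b a 1.
Proof.
move=> ab uu uv; have ba : b != a by rewrite eq_sym.
have un1 : (-1 : R) \is a GRing.unit by rewrite unitrN unitr1.
have uuv : u * v \is a GRing.unit by rewrite unitrM uu uv.
pose w (t : R) := elem_mx a b t *m elem_mx b a (- t^-1) *m elem_mx a b t.
have wW : forall t, t \is a GRing.unit -> w t = Wm a b t t^-1.
  by move=> t ut; rewrite /w wE ?mulrV.
have hR : w u *m w (-1) *m w v = w (u * v).
  rewrite !wW // Wm3 // invrN1 invrM //; congr Wm; ring.
have isEw : forall t, isE (w t).
  by move=> t; apply: isE_mul; [apply: isE_mul|]; apply: isE_elem.
have rw : forall t, t \is a GRing.unit -> rho (w t) = Wm a b (C a b t) (C b a t^-1).
  by move=> t ut; rewrite rho3 // CN // wE // Cw.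
have := congr1 rho hR.
rewrite (rhoEM (isE_mul (isEw u) (isEw (-1))) (isEw v)) (rhoEM (isEw u) (isEw (-1))).
rewrite !rw // Wm3 // => /matrixP/(_ a b); rewrite !Wm_ab //.
by rewrite invrN1 CN // => <-; ring.
Qed.


Lemma dec (r : R) : r \is a GRing.unit \/ exists u, u \is a GRing.unit /\ r = u + 1.
Proof.
case: (eqVneq (piR r) 0) => h; last by left; apply: locR.
right; exists (r - 1); split; last by rewrite subrK.
by apply: locR; rewrite rmorphB rmorph1 h sub0r oppr_eq0 oner_eq0.
Qed.

Lemma ext_add (F G : R -> S) : (forall x y, F (x + y) = F x + F y) ->
  (forall x y, G (x + y) = G x + G y) -> F 1 = G 1 ->
  (forall v, v \is a GRing.unit -> F v = G v) -> forall r, F r = G r.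
Proof.
move=> FD GD F1 FG r; case: (dec r) => [ur|[u [uu ->]]]; first exact: FG.
by rewrite FD GD F1 FG.
Qed.

Let i0 : 'I_n := ord0.
Let i1 : 'I_n := lift ord0 ord0.
Lemma i01 : i0 != i1. Proof. exact: neq_lift. Qed.
Lemma i10 : i1 != i0. Proof. by rewrite eq_sym i01. Qed.

Definition fC r := C i0 i1 r * C i1 i0 1.

Lemma fD x y : fC (x + y) = fC x + fC y.
Proof. by rewrite /fC CD ?i01 // mulrDl. Qed.

Lemma fB x y : fC (x - y) = fC x - fC y.
Proof. by rewrite fD /fC CN ?i01 // mulNr. Qed.

Lemma f1 : fC 1 = 1.
Proof. by rewrite /fC mu // i01. Qed.

Lemma fMu u v : u \is a GRing.unit -> v \is a GRing.unit -> fC (u * v) = fC u * fC v.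
Proof.
move=> uu uv; rewrite /fC Cmul ?i01 //.
have h := mu i01.
transitivity (C i0 i1 u * C i1 i0 1 * (C i0 i1 v * C i1 i0 1) * (C i0 i1 1 * C i1 i0 1)).
  by rewrite h mulr1; ring.
by rewrite h mulr1.
Qed.

Lemma fM x y : fC (x * y) = fC x * fC y.
Proof.
case: (dec x) => [ux|[u [uu ->]]]; case: (dec y) => [uy|[v [uv ->]]].
- exact: fMu.
- by rewrite mulrDr mulr1 fD fMu // fD f1 mulrDr mulr1.
- by rewrite mulrDl mul1r fD fMu // fD f1 mulrDl mul1r.
- rewrite mulrDl mulrDr mul1r mulr1 !fD fMu ?f1 //; ring.
Qed.

Lemma transfer a b : a != b -> (forall r, C a b r = C a b 1 * fC r) ->
  forall r, C b a r = C b a 1 * fC r.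
Proof.
move=> ab hab; have ba : b != a by rewrite eq_sym.
apply: (@ext_add (C b a) (fun r => C b a 1 * fC r)).
- by move=> x y; rewrite CD.
- by move=> x y; rewrite fD mulrDr.
- by rewrite f1 mulr1.
move=> v uv; have uu : v^-1 \is a GRing.unit by rewrite unitrV.
have e1 := Cw ab uu; rewrite invrK hab in e1.
have fuv : fC v^-1 * fC v = 1 by rewrite -fMu // mulVr // f1.
have := mu ab => m1.
have : C b a v * ((C a b 1 * C b a 1) * (fC v^-1 * fC v)) =
   (C a b 1 * fC v^-1 * C b a v) * (C b a 1 * fC v) by ring.
by rewrite m1 fuv e1 !mulr1 mul1r.
Qed.

Lemma comm a b c r s : a != b -> b != c -> a != c ->
  C a c (r * s) = C a b r * C b c s.
Proof.
move=> ab bc ac.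
have := congr1 rho (commE r s ab bc ac); rewrite rho4 // !CN // commE //.
by rewrite rhoEC // => /matrixP/(_ a c); rewrite !elem_ab.
Qed.


Lemma h01 r : C i0 i1 r = C i0 i1 1 * fC r.
Proof. by rewrite /fC mulrCA mu ?i01 // mulr1. Qed.

Lemma ha0 a : a != i0 -> forall r, C a i0 r = C a i0 1 * fC r.
Proof.
move=> a0 r; case: (eqVneq a i1) => [->|a1]; first exact: (transfer i01 h01).
have e1 := comm r 1 a0 i01 a1; have e2 := comm 1 r a0 i01 a1.
rewrite mulr1 in e1; rewrite mul1r e1 in e2.
have := mu i01 => m1.
have : C a i0 r * (C i0 i1 1 * C i1 i0 1) = C a i0 1 * (C i0 i1 r * C i1 i0 1).
  by rewrite mulrA e2 mulrA.
by rewrite m1 mulr1.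
Qed.

Lemma h0b b : b != i0 -> forall r, C i0 b r = C i0 b 1 * fC r.
Proof. by move=> b0; apply: transfer b0 (ha0 b0). Qed.

Definition lam a := if a == i0 then 1 else C a i0 1.
Definition lam' a := if a == i0 then 1 else C i0 a 1.

Lemma Cfinal a b r : a != b -> C a b r = lam a * lam' b * fC r.
Proof.
move=> ab; rewrite /lam /lam'.
case: (eqVneq a i0) => [ea|a0].
  by subst a; rewrite eq_sym (negPf ab) mul1r h0b // eq_sym.
case: (eqVneq b i0) => [eb|b0]; first by subst b; rewrite mulr1 ha0.
have b0' : i0 != b by rewrite eq_sym.
by have := comm r 1 a0 b0' ab; rewrite mulr1 => ->; rewrite ha0 //; ring.
Qed.

Lemma lamlam' a : lam a * lam' a = 1.
Proof.
rewrite /lam /lam'; case: (eqVneq a i0) => [_|a0]; first by rewrite mulr1.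
by rewrite mu.
Qed.

Lemma lam'lam a : lam' a * lam a = 1.
Proof. by rewrite mulrC lamlam'. Qed.

Lemma pilam a : piS (lam a) = 1.
Proof.
rewrite /lam; case: (eqVneq a i0) => [_|a0]; first by rewrite rmorph1.
by rewrite Cpi // rmorph1.
Qed.


Definition fR : {rmorphism R -> S} := mkRM fB f1 fM.

Definition Dm : 'M[S]_n := diag_mx (\row_i lam i).
Definition Dm' : 'M[S]_n := diag_mx (\row_i lam' i).

Lemma DD' : Dm *m Dm' = 1%:M.
Proof.
apply/matrixP=> i j; rewrite mul_diag_mx !mxE.
by case: (eqVneq i j) => [->|ij]; rewrite ?mulr1n ?mulr0n ?mulr0 // lamlam'.
Qed.

Lemma D'D : Dm' *m Dm = 1%:M.
Proof.
apply/matrixP=> i j; rewrite mul_diag_mx !mxE.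
by case: (eqVneq i j) => [->|ij]; rewrite ?mulr1n ?mulr0n ?mulr0 // lam'lam.
Qed.

Lemma conjE a b r : a != b -> Dm *m elem_mx a b (fR r) *m Dm' = elem_mx a b (C a b r).
Proof.
move=> ab; apply/matrixP=> i j; rewrite mul_mx_diag mul_diag_mx !mxE.
rewrite Cfinal // mkRME.
case: (eqVneq i j) => [->|ij].
  have -> : (j == a) && (j == b) = false.
    by case: (eqVneq j a) => // ->; rewrite (negPf ab).
  by rewrite /= !mulr0 !addr0 mulr1 lamlam'.
rewrite /= !add0r; case: (eqVneq i a) => [->|_]; case: (eqVneq j b) => [->|_] /=;
  rewrite ?mulr1 ?mul0r ?mulr0 //; ring.
Qed.

Lemma rho_phi g : isE g -> rho g = Dm *m map_mx fR g *m Dm'.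
Proof.
elim=> [|a b r g' ab Eg' IH]; first by rewrite rho1 map_mx1 mulmx1 DD'.
rewrite (rhoEM (isE_elem r ab) Eg') IH rhoEC // -conjE // map_mxM map_elem.
by rewrite !mulmxA -(mulmxA _ Dm') D'D mulmx1.
Qed.

Lemma rho_phiSL g : inSL g -> rho g = Dm *m map_mx fR g *m Dm'.
Proof. by move=> sg; apply: rho_phi; apply: (genSL locR). Qed.

Lemma fR_hom : is_Chom piR piS fR.
Proof.
move=> x; rewrite mkRME /fC rmorphM !Cpi ?i01 ?i10 //.
by rewrite rmorph1 mulr1.
Qed.

Lemma piD : map_mx piS Dm = 1%:M.
Proof.
apply/matrixP=> i j; rewrite !mxE rmorphMn pilam.
by case: (i == j); rewrite ?rmorph1 ?mulr1n ?mulr0n ?rmorph0.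
Qed.


Lemma back_main : exists f : {rmorphism R -> S}, is_Chom piR piS f /\
  exists D D' : 'M[S]_n, D *m D' = 1%:M /\ map_mx piS D = 1%:M /\
    forall g, inSL g -> rho g = D *m map_mx f g *m D'.
Proof.
exists fR; split; first exact: fR_hom.
exists Dm, Dm'; split; first exact: DD'.
by split; [exact: piD | exact: rho_phiSL].
Qed.

End Back.


Lemma mpow_map (k : fieldType) (R S : comUnitRingType) (piR : {rmorphism R -> k})
  (piS : {rmorphism S -> k}) (f : {rmorphism R -> S}) :
  is_Chom piR piS f -> forall N x, mpow piR N x -> mpow piS N (f x).
Proof.
move=> hf; elim=> [//|N IH] x [s [hs ->]].
exists [seq (f p.1, f p.2) | p <- s]; split.
  move=> p /mapP [q qs ->] /=; have [h1 h2] := hs q qs; split; last exact: IH.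
  by rewrite /mideal hf.
by rewrite big_map rmorph_sum; apply: eq_bigr => q _; rewrite rmorphM.
Qed.

Lemma invmx_eq (S : comUnitRingType) n (A B : 'M[S]_n) : A *m B = 1%:M -> invmx A = B.
Proof.
move=> AB; have [uA _] := mulmx1_unit AB.
by rewrite -[RHS](mulKmx uA) AB mulmx1.
Qed.

Unset Implicit Arguments.

Theorem mainTheorem11 (k : finFieldType) (R S : comUnitRingType)
  (piR : {rmorphism R -> k}) (piS : {rmorphism S -> k}) (n : nat)
  (hR : is_CObj piR) (hS : is_CObj piS) (hn : (2 <= n)%N) :
  (* (i) iota_*(S) is injective *)
  (forall f g : {rmorphism R -> S}, is_Chom piR piS f -> is_Chom piR piS g ->
     strict_equiv piS (fun A : 'M[R]_n => map_mx f A) (fun A => map_mx g A) ->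
     f =1 g) /\
  (* (ii) characterization of the image, for the class xi = [rho0] *)
  (forall rho0 : 'M[R]_n -> 'M[S]_n, is_lift piR piS rho0 ->
     ((exists f : {rmorphism R -> S}, is_Chom piR piS f /\
         strict_equiv piS (fun A => map_mx f A) rho0)
      <->
      (exists rho : 'M[R]_n -> 'M[S]_n, is_lift piR piS rho /\
         strict_equiv piS rho0 rho /\
         forall a b : 'I_n, a != b -> forall r : R,
           exists c : S, rho (elem_mx a b r) = elem_mx a b c))).
Proof.
case: hR => [[_ locR] _]; case: hS => [[_ locS] _].
case: n hn => [|[|m]] // _.
have unitmap : forall M : 'M[S]_m.+2, map_mx piS M = 1%:M -> M \in unitmx.
  move=> M pM; rewrite unitmxE; apply: locS.
  by rewrite -det_map_mx pM det1 oner_neq0.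
have mapinv : forall M : 'M[S]_m.+2, map_mx piS M = 1%:M -> map_mx piS (invmx M) = 1%:M.
  move=> M pM; have uM := unitmap M pM.
  by rewrite -[LHS]mulmx1 -pM -map_mxM mulVmx // map_mx1.
pose a : 'I_m.+2 := ord0; pose b : 'I_m.+2 := lift ord0 ord0.
have ab : a != b by exact: neq_lift.
split.
  move=> f g hf hg [M [pM hM]] r.
  have uM := unitmap M pM.
  have key : forall r, elem_mx a b (g r) *m M = M *m elem_mx a b (f r).
    move=> r'; have := hM _ (det_elem r' ab); rewrite !map_elem => ->.
    by rewrite mulmxKV.
  have e : forall r, g r * M b b = f r * M a a.
    move=> r'; move/matrixP/(_ a b): (key r'); rewrite elemMl elemMr !eqxx !mul1r.
    by move/addrI.
  have Mab : M b b = M a a by have := e 1; rewrite !rmorph1 !mul1r.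
  have uMa : M a a \is a GRing.unit.
    apply: locS; move/matrixP/(_ a a): pM; rewrite !mxE eqxx => ->.
    exact: oner_neq0.
  by apply: (mulIr uMa); rewrite -e Mab.
move=> rho0 hl0; split.
  case=> f [hf [M [pM hM]]]; have uM := unitmap M pM.
  exists (fun A => map_mx f A); split.
    split.
      by move=> g sg; rewrite unitmxE det_map_mx sg rmorph1 unitr1.
    split; first by move=> g h _ _; rewrite map_mxM.
    split; first by move=> g _; apply/matrixP=> i j; rewrite !mxE hf.
    move=> N; exists N => g _ hc i j.
    have -> : (1%:M : 'M[S]_m.+2) i j = f ((1%:M : 'M[R]_m.+2) i j) by rewrite !mxE rmorph_nat.
    by rewrite mxE -rmorphB; apply: mpow_map.
  split.
    exists (invmx M); split; first exact: mapinv.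
    move=> g sg; rewrite invmxK hM // !mulmxA mulVmx // mul1mx -mulmxA mulVmx //.
    by rewrite mulmx1.
  by move=> a' b' _ r; exists (f r); rewrite map_elem.
case=> rho [[rU [rM [rR _]]] [[M1 [pM1 hM1]] rE]].
have uM1 := unitmap M1 pM1.
have [f [hf [D [D' [DD' [pD hD]]]]]] := back_main locR locS rU rM rR rE.
exists f; split=> //.
exists (invmx M1 *m D); split.
  by rewrite map_mxM mapinv // pD mulmx1.
move=> g sg.
have -> : invmx (invmx M1 *m D) = D' *m M1.
  by apply: invmx_eq; rewrite !mulmxA -(mulmxA _ D) DD' mulmx1 mulVmx.
have -> : rho0 g = invmx M1 *m rho g *m M1.
  by rewrite hM1 // !mulmxA mulVmx // mul1mx -mulmxA mulVmx // mulmx1.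
by rewrite hD // !mulmxA.
Qed.
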